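(* Let $f:\mathbb{R}^n\to\mathbb{R}$ be convex and continuously differentiable with locally Lipschitz gradient, with $\mathcal{X}^*:=\arg\min f\neq\emptyset$ and optimal value $f^*$. Fix $x^0$, $\alpha_0>0$, $\theta_0>0$, $\tau\ge1$, $0<\omega\le\frac1{\sqrt2}$, $\gamma_k\in[\gamma_{\min},\gamma_{\max}]\subset(0,\infty)$, and generate $x^{k+1}=x^k-\alpha_k\gamma_k\nabla f(x^k)$ with, for $k\ge1$, $L_k:=\frac{\|\nabla f(x^k)-\nabla f(x^{k-1})\|}{\|x^k-x^{k-1}\|}$, $\alpha_k:=\min\{\frac{\alpha_{k-1}\gamma_{k-1}}{\gamma_k}\sqrt{2(1-\omega^2)+\theta_{k-1}/\tau},\frac{\omega}{\gamma_kL_k}\}$, $\theta_k:=\frac{\alpha_k\gamma_k}{\alpha_{k-1}\gamma_{k-1}}$. Let $\eta:=\mathrm{dist}^2(x^0;\mathcal{X}^* )+2\alpha_0^2\gamma_0^2\|\nabla f(x^0)\|^2+2\alpha_0\gamma_0\theta_0(f(x^0)-f^* )$, let $W:=\overline B(0;R)$ with $R>\sqrt\eta+\mathrm{dist}(x^0;\mathcal{X}^* )+\|x^0\|$, and let $L_W>0$ satisfy $\|\nabla f(x)-\nabla f(y)\|\le L_W\|x-y\|$ on $W$. Then: (a) $\min_{1\le k\le N}\|\nabla f(x^k)\|\le\sqrt{\frac{L_W^2\eta}{N\min\{L_W\alpha_0\gamma_0,\omega\}}}$ for all $N\in\mathbb{N}$, and for every $\varepsilon>0$ the first index $N_{\nabla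 f}(\varepsilon)$ with $\|\nabla f(x^k)\|\le\varepsilon$ satisfies $N_{\nabla f}(\varepsilon)\le\Big\lceil1+\frac{L_W^2\eta}{\varepsilon^2\min\{L_W\alpha_0\gamma_0,\omega\}}\Big\rceil$; (b) with $f_N^*:=\min\{f(x^k):0\le k\le N\}$, one has $f_N^*-f^*\le\frac{L_W((R+\|x^0\|)^2+\eta)}{2N\min\{L_W\alpha_0\gamma_0,\omega\}}$ for all $N\in\mathbb{N}$, and for every $\varepsilon>0$ the first index $N_f(\varepsilon)$ with $f(x^k)-f^*\le\varepsilon$ satisfies $N_f(\varepsilon)\le\Big\lceil1+\frac{L_W((R+\|x^0\|)^2+\eta)}{2\varepsilon\min\{L_W\alpha_0\gamma_0,\omega\}}\Big\rceil$.
   Context: This is the adaptive scaled gradient algorithm (AdaSGA). $\overline B(0;R)$ is the closed ball; $\mathrm{dist}(x;S)=\inf_{z\in S}\|z-x\|$. *)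

(* Defs.v *)
From HB Require Import structures.
From mathcomp Require Import all_boot all_order all_algebra.
From mathcomp Require Import all_classical all_reals all_analysis.
Set Implicit Arguments. Unset Strict Implicit. Unset Printing Implicit Defensive.
Import Order.TTheory GRing.Theory Num.Theory.
Import numFieldNormedType.Exports.
Local Open Scope classical_set_scope.
Local Open Scope ring_scope.

Definition dotp (R : realType) (n : nat) (u v : 'rV[R]_n) : R :=
  \sum_(i < n) u ord0 i * v ord0 i.

Definition enorm (R : realType) (n : nat) (v : 'rV[R]_n) : R :=
  Num.sqrt (dotp v v).

Definition dist_to (R : realType) (n : nat) (x : 'rV[R]_n) (S : set 'rV[R]_n) : R :=
  inf [set enorm (z - x) | z in S].

Definition argmin (R : realType) (n : nat) (f : 'rV[R]_n -> R) : set 'rV[R]_n :=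
  [set z | forall y, f z <= f y].

Definition econvex (R : realType) (n : nat) (f : 'rV[R]_n -> R) : Prop :=
  forall (x y : 'rV[R]_n) (t : R), 0 <= t -> t <= 1 ->
    f ((1 - t) *: x + t *: y) <= (1 - t) * f x + t * f y.

Definition is_gradient (R : realType) (n : nat) (f : 'rV[R]_n -> R)
  (g : 'rV[R]_n -> 'rV[R]_n) : Prop :=
  forall x, differentiable f x /\ forall h, 'd f x h = dotp (g x) h.

Definition elipschitz_on (R : realType) (n : nat) (g : 'rV[R]_n -> 'rV[R]_n)
  (W : set 'rV[R]_n) (L : R) : Prop :=
  forall x y, W x -> W y -> enorm (g x - g y) <= L * enorm (x - y).

Definition ecball (R : realType) (n : nat) (c : 'rV[R]_n) (r : R) : set 'rV[R]_n :=
  [set x | enorm (x - c) <= r].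

Definition elocally_lipschitz (R : realType) (n : nat) (g : 'rV[R]_n -> 'rV[R]_n) : Prop :=
  forall x, exists r : R, exists L : R, 0 < r /\ elipschitz_on g (ecball x r) L.

(* L_k for k >= 1 (mathcomp convention: u / 0 = 0). *)
Definition Lk (R : realType) (n : nat) (g : 'rV[R]_n -> 'rV[R]_n)
  (x : nat -> 'rV[R]_n) (k : nat) : R :=
  enorm (g (x k) - g (x k.-1)) / enorm (x k - x k.-1).

(* The AdaSGA step-size rule for k >= 1; omega / (gamma_k L_k) is read as
   +oo when L_k = 0, so then the minimum is the first term. *)
Definition adasga_alpha (R : realType) (n : nat) (g : 'rV[R]_n -> 'rV[R]_n)
  (x : nat -> 'rV[R]_n) (alpha theta gamma : nat -> R) (tau omega : R) (k : nat) : R :=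
  let A := alpha k.-1 * gamma k.-1 / gamma k *
           Num.sqrt (2 * (1 - omega ^+ 2) + theta k.-1 / tau) in
  if Lk g x k == 0 then A else Num.min A (omega / (gamma k * Lk g x k)).

(* Main.v *)
Require Import Defs.
From HB Require Import structures.
From mathcomp Require Import all_boot all_order all_algebra.
From mathcomp Require Import all_classical all_reals all_analysis.
From mathcomp Require Import ring lra.
Set Implicit Arguments. Unset Strict Implicit. Unset Printing Implicit Defensive.
Import Order.TTheory GRing.Theory Num.Theory.
Import numFieldNormedType.Exports.
Local Open Scope classical_set_scope.
Local Open Scope ring_scope.
Section Vec.
Variables (R : realType) (n : nat).
Implicit Types (u v w : 'rV[R]_n) (a b : R).

Lemma dotpC u v : dotp u v = dotp v u.
Proof. by apply: eq_bigr => i _; rewrite mulrC. Qed.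

Lemma dotpDl u v w : dotp (u + v) w = dotp u w + dotp v w.
Proof. by rewrite /dotp -big_split; apply: eq_bigr => i _; rewrite !mxE mulrDl. Qed.

Lemma dotpDr u v w : dotp w (u + v) = dotp w u + dotp w v.
Proof. by rewrite dotpC dotpDl !(dotpC w). Qed.

Lemma dotpZl a u v : dotp (a *: u) v = a * dotp u v.
Proof. by rewrite /dotp mulr_sumr; apply: eq_bigr => i _; rewrite !mxE mulrA. Qed.

Lemma dotpZr a u v : dotp u (a *: v) = a * dotp u v.
Proof. by rewrite dotpC dotpZl dotpC. Qed.

Lemma dotpNl u v : dotp (- u) v = - dotp u v.
Proof. by rewrite -scaleN1r dotpZl mulN1r. Qed.

Lemma dotpNr u v : dotp u (- v) = - dotp u v.
Proof. by rewrite dotpC dotpNl dotpC. Qed.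

Lemma dotpBl u v w : dotp (u - v) w = dotp u w - dotp v w.
Proof. by rewrite dotpDl dotpNl. Qed.

Lemma dotpBr u v w : dotp w (u - v) = dotp w u - dotp w v.
Proof. by rewrite dotpDr dotpNr. Qed.

Lemma dotp0l v : dotp 0 v = 0.
Proof. by rewrite /dotp big1 // => i _; rewrite mxE mul0r. Qed.

Lemma dotp_ge0 v : 0 <= dotp v v.
Proof. by rewrite /dotp sumr_ge0 // => i _; rewrite -expr2 sqr_ge0. Qed.

Lemma dotp_eq0 v : dotp v v = 0 -> v = 0.
Proof.
move=> h; apply/rowP => i; rewrite mxE.
have : dotp v v == 0 by rewrite h.
rewrite /dotp.
rewrite psumr_eq0; last by move=> j _; rewrite -expr2 sqr_ge0.
move=> /allP /(_ i (mem_index_enum _)) /implyP /(_ isT).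
by rewrite mulf_eq0 orbb => /eqP.
Qed.

Lemma enorm_ge0 v : 0 <= enorm v.
Proof. exact: sqrtr_ge0. Qed.

Lemma enorm_sq v : enorm v ^+ 2 = dotp v v.
Proof. by rewrite /enorm sqr_sqrtr // dotp_ge0. Qed.

Lemma enormN v : enorm (- v) = enorm v.
Proof. by rewrite /enorm dotpNl dotpNr opprK. Qed.

Lemma enormB u v : enorm (u - v) = enorm (v - u).
Proof. by rewrite -enormN opprB. Qed.

Lemma enormZ a v : enorm (a *: v) = `|a| * enorm v.
Proof. by rewrite /enorm dotpZl dotpZr mulrA -expr2 sqrtrM ?sqr_ge0 // sqrtr_sqr. Qed.

Lemma enorm0 : enorm (0 : 'rV[R]_n) = 0.
Proof. by rewrite /enorm dotp0l sqrtr0. Qed.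

Lemma dotp_sqr_le u v : dotp u v ^+ 2 <= dotp u u * dotp v v.
Proof.
have [v0|vn0] := eqVneq (dotp v v) 0.
  by move/dotp_eq0: v0 => ->; rewrite dotpC !dotp0l expr0n /= mulr0.
have vp : 0 < dotp v v by rewrite lt_neqAle eq_sym vn0 dotp_ge0.
set t := dotp u v / dotp v v.
have := dotp_ge0 (u - t *: v).
rewrite !(dotpBl, dotpBr, dotpZl, dotpZr) (dotpC v u) => h.
have e : dotp u u - t * dotp u v - t * (dotp u v - t * dotp v v)
  = dotp u u - dotp u v ^+ 2 / dotp v v.
  by rewrite /t; field.
by rewrite e subr_ge0 ler_pdivrMr // mulrC in h.
Qed.

Lemma cauchy_schwarz u v : dotp u v <= enorm u * enorm v.
Proof.
rewrite /enorm -sqrtrM ?dotp_ge0 //.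
apply: (le_trans (ler_norm _)).
by rewrite -sqrtr_sqr ler_sqrt // ?mulr_ge0 ?dotp_ge0 // dotp_sqr_le.
Qed.

Lemma enormD u v : enorm (u + v) <= enorm u + enorm v.
Proof.
rewrite -(ler_pXn2r (n:=2)) ?nnegrE ?addr_ge0 ?enorm_ge0 //.
rewrite enorm_sq dotpDl !dotpDr (dotpC v u) sqrrD !enorm_sq.
have := cauchy_schwarz u v; lra.
Qed.

Lemma enorm_sqD u v : enorm (u + v) ^+ 2 = enorm u ^+ 2 + 2 * dotp u v + enorm v ^+ 2.
Proof. rewrite !enorm_sq dotpDl !dotpDr (dotpC v u); ring. Qed.

Lemma enorm_sqB u v : enorm (u - v) ^+ 2 = enorm u ^+ 2 - 2 * dotp u v + enorm v ^+ 2.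
Proof. rewrite enorm_sqD dotpNr enormN; ring. Qed.

Lemma enorm_sqZ a v : enorm (a *: v) ^+ 2 = a ^+ 2 * enorm v ^+ 2.
Proof. by rewrite enormZ exprMn real_normK // num_real. Qed.

End Vec.

Section Grad.
Variables (R : realType) (n : nat) (f : 'rV[R]_n -> R) (g : 'rV[R]_n -> 'rV[R]_n).
Hypothesis fconv : econvex f.
Hypothesis fgrad : is_gradient f g.

Lemma grad_ineq x y : f x + dotp (g x) (y - x) <= f y.
Proof.
have [dif dd] := fgrad x.
have der := @diff_derivable _ _ _ f x (y - x) dif.
have E := deriveE (y - x) dif.
rewrite -dd -E.
set F := (fun h : R => h^-1 *: ((f \o shift x) (h *: (y - x)) - f x)).
have cr : F @ 0^'+ --> derive f x (y - x).
  move=> A /der /nbhs_ballP [_ /posnumP[e] xe_A].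
  by exists e%:num => //= z xe_z /gt_eqF/negbT/xe_A; exact.
rewrite addrC -lerBrDr.
apply: (cvgr_to_le cr).
exists 1 => //= h /= hb h0.
rewrite /F /= /shift /=.
have h1 : h <= 1.
  by move: hb; rewrite /ball /= sub0r normrN (ger0_norm (ltW h0)) => /ltW.
have := fconv x y (ltW h0) h1.
have -> : (1 - h) *: x + h *: y = h *: (y - x) + x.
  by rewrite scalerBr scalerBl scale1r addrC addrA -[h *: y - h *: x + x]addrA [- _ + _]addrC addrA.
move=> hc.
rewrite ler_pdivrMl //.
have -> : h * (f y - f x) = (1 - h) * f x + h * f y - f x by ring.
by rewrite lerB.
Qed.

End Grad.

Lemma le_of_le_addinv (R : realType) (a b c : R) :
  (forall m : nat, a <= b + c / (m.+1)%:R) -> a <= b.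
Proof.
move=> h; rewrite leNgt; apply/negP => ab.
have hc : 0 <= c.
  rewrite leNgt; apply/negP => c0.
  have := h 0%N; rewrite divr1 => h0; lra.
set m := Num.truncn (c / (a - b)).
have := h m.
have ab0 : 0 < a - b by rewrite subr_gt0.
have := truncnS_gt (c / (a - b)); rewrite -/m => hm.
have mp : 0 < (m.+1)%:R :> R by rewrite ltr0n.
have : c / (m.+1)%:R < a - b.
  rewrite ltr_pdivrMr // mulrC -ltr_pdivrMr //.
move=> h1 h2; move: (c / _) h1 h2 => t h1 h2; lra.
Qed.

Section Descent.
Variables (R : realType) (n : nat) (f : 'rV[R]_n -> R) (g : 'rV[R]_n -> 'rV[R]_n).
Hypothesis fconv : econvex f.
Hypothesis fgrad : is_gradient f g.

Lemma descent_lemma (W : set 'rV[R]_n) (L : R) x y :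
  0 <= L -> elipschitz_on g W L ->
  (forall t : R, 0 <= t -> t <= 1 -> W (x + t *: (y - x))) ->
  f y <= f x + dotp (g x) (y - x) + L / 2 * enorm (y - x) ^+ 2.
Proof.
move=> L0 lip seg.
set d := y - x.
apply: (@le_of_le_addinv _ _ _ (L / 2 * enorm d ^+ 2)) => m.
set M := (m.+1)%:R : R.
have Mp : 0 < M by rewrite ltr0n.
have key : forall k, (k <= m.+1)%N ->
  f (x + (k%:R / M) *: d) - f x <= (k%:R / M) * dotp (g x) d
     + L * enorm d ^+ 2 * (k%:R * (k%:R + 1)) / (2 * M ^+ 2).
  elim=> [|k IH] hk.
    by rewrite !mulr0n !mul0r scale0r addr0 subrr !(mul0r, mulr0, add0r).
  have hk' : (k <= m.+1)%N by apply: ltnW.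
  have IH' := IH hk'.
  set zk := x + (k%:R / M) *: d.
  set zk1 := x + (k.+1%:R / M) *: d.
  have tk1 : 0 <= k.+1%:R / M <= 1.
    apply/andP; split; first by rewrite divr_ge0 // ltW.
    by rewrite ler_pdivrMr // mul1r ler_nat.
  have Wz1 : W zk1 by apply: seg; case/andP: tk1.
  have Wx : W x by have := seg 0 (lexx 0) ler01; rewrite scale0r addr0.
  have g1 := grad_ineq fconv fgrad zk1 zk.
  have dz : zk - zk1 = - ((1 / M) *: d).
    rewrite /zk /zk1 -natr1; apply/rowP => i; rewrite !mxE.
    by field; rewrite gt_eqF.
  rewrite dz dotpNr dotpZr in g1.
  have cs := cauchy_schwarz (g zk1 - g x) d.
  have lp := lip _ _ Wz1 Wx.
  have ez : enorm (zk1 - x) = k.+1%:R / M * enorm d.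
    rewrite /zk1 addrC addKr enormZ ger0_norm //; by case/andP: tk1.
  rewrite ez in lp.
  have e2 : dotp (g zk1) d = dotp (g x) d + dotp (g zk1 - g x) d.
    by rewrite dotpBl addrC subrK.
  have hb : dotp (g zk1 - g x) d <= L * (k.+1%:R / M * enorm d) * enorm d.
    apply: (le_trans cs); apply: ler_wpM2r => //; exact: enorm_ge0.
  have nd := enorm_ge0 d.
  rewrite -/zk -/zk1.
  have -> : (k.+1%:R / M) * dotp (g x) d + L * enorm d ^+ 2 * (k.+1%:R * (k.+1%:R + 1)) / (2 * M ^+ 2)
     = ((k%:R / M) * dotp (g x) d + L * enorm d ^+ 2 * (k%:R * (k%:R + 1)) / (2 * M ^+ 2))
       + 1 / M * (dotp (g x) d + L * (k.+1%:R / M * enorm d) * enorm d).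
    rewrite -natr1; field; by rewrite gt_eqF.
  have hM : 0 <= 1 / M by rewrite divr_ge0 // ltW.
  have := ler_wpM2l hM (lerD (lexx (dotp (g x) d)) hb).
  rewrite -e2 => h3.
  move: IH' g1 h3; rewrite -/zk; clearbody zk zk1 d M; lra.
have := key m.+1 (leqnn _).
rewrite -/M divff ?gt_eqF // scale1r /d.
have -> : x + (y - x) = y by rewrite addrC subrK.
move=> h.
have e : L * enorm (y - x) ^+ 2 * (M * (M + 1)) / (2 * M ^+ 2)
   = L / 2 * enorm (y - x) ^+ 2 + L / 2 * enorm (y - x) ^+ 2 / M.
  by field; rewrite gt_eqF.
rewrite e in h; rewrite /d; clearbody M; lra.
Qed.

End Descent.

Lemma sqrt_subadd (R : realType) (a b : R) : 0 <= a -> 0 <= b ->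
  Num.sqrt (a + b) <= Num.sqrt a + Num.sqrt b.
Proof.
move=> a0 b0.
have sa := sqrtr_ge0 a; have sb := sqrtr_ge0 b.
rewrite -(ger0_norm (addr_ge0 sa sb)) -sqrtr_sqr ler_sqrt ?sqr_ge0 //.
rewrite sqrrD !sqr_sqrtr //.
have := mulr_ge0 sa sb; lra.
Qed.

Lemma le_sqrt_of_sq (R : realType) (u E : R) : 0 <= u -> u ^+ 2 <= E -> u <= Num.sqrt E.
Proof.
move=> u0 h; rewrite -(ger0_norm u0) -sqrtr_sqr ler_sqrt //.
exact: le_trans (sqr_ge0 u) h.
Qed.

Lemma ball_conv (R : realType) n (Rad : R) (u v : 'rV[R]_n) (s : R) :
  enorm u <= Rad -> enorm v <= Rad -> 0 <= s -> s <= 1 ->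
  enorm (u + s *: (v - u)) <= Rad.
Proof.
move=> hu hv s0 s1.
have -> : u + s *: (v - u) = (1 - s) *: u + s *: v.
  by apply/rowP => i; rewrite !mxE; ring.
apply: (le_trans (enormD _ _)).
rewrite !enormZ (ger0_norm s0) ger0_norm ?subr_ge0 //.
have h1 := ler_wpM2l (s0) hv.
have h2 : 0 <= 1 - s by rewrite subr_ge0.
have := ler_wpM2l h2 hu; lra.
Qed.


Lemma first_index (R : realType) (P : nat -> bool) (C : R) : 0 <= C ->
  (forall N : nat, (1 <= N)%N -> C <= N%:R -> exists k, (k <= N)%N /\ P k) ->
  exists Neps : nat, [/\ P Neps, (forall j : nat, (j < Neps)%N -> ~ P j) &
    (Neps%:Z <= Num.ceil (1 + C))%R].
Proof.
move=> C0 h.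
set z := Num.ceil (1 + C).
have hz : 1 + C <= z%:~R := ceil_ge _.
have z1 : (1 <= z)%R.
  rewrite -(ler_int R); apply: le_trans hz; rewrite lerDl //.
have z0 : (0 <= z)%R by apply: le_trans z1.
set N := `|z|%N.
have eN : N%:Z = z by rewrite /N gez0_abs.
have NR : N%:R = z%:~R :> R by rewrite -eN pmulrn.
have N1 : (1 <= N)%N by rewrite -(@ler_nat R) NR -(ler_int R) in z1 *.
have CN : C <= N%:R by rewrite NR; apply: le_trans hz; rewrite lerDr.
have [k [kN Pk]] := h N N1 CN.
have exP : exists k, P k by exists k.
case: (ex_minnP exP) => m Pm hmin.
exists m; split => //.
  by move=> j jm Pj; have := hmin j Pj; rewrite leqNgt jm.
have mk := hmin k Pk.
rewrite -eN lez_nat; exact: leq_trans mk kN.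
Qed.

Lemma finite_gap (R : realType) (a : nat -> R) (C : R) N :
  (forall k, (1 <= k <= N)%N -> C < a k) ->
  exists2 d : R, 0 < d & forall k, (1 <= k <= N)%N -> C + d <= a k.
Proof.
elim: N => [|N IH] h.
  by exists 1 => // k /andP[ha hb]; move: (leq_trans ha hb).
have [d d0 hd] : exists2 d : R, 0 < d & forall k, (1 <= k <= N)%N -> C + d <= a k.
  by apply: IH => k /andP[ha hb]; apply: h; rewrite ha /= (leq_trans hb).
have hN : C < a N.+1 by apply: h; rewrite /= leqnn.
exists (Num.min d (a N.+1 - C)); first by rewrite lt_min d0 subr_gt0.
move=> k /andP[ha hb].
have [kN|kN] := leqP k N.
  apply: le_trans (hd k _); last by rewrite ha.
  by rewrite lerD2l ge_min lexx.
have -> : k = N.+1 by apply/eqP; rewrite eqn_leq hb kN.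
have : Num.min d (a N.+1 - C) <= a N.+1 - C by rewrite ge_min lexx orbT.
lra.
Qed.

Section Algo.
Variables (R : realType) (n : nat)
  (f : 'rV[R]_n -> R) (g : 'rV[R]_n -> 'rV[R]_n) (fstar : R)
  (x : nat -> 'rV[R]_n) (alpha theta gamma : nat -> R)
  (tau omega gmin gmax eta Rad LW : R).
Hypotheses (hconv : econvex f) (hgrad : is_gradient f g) (hcont : continuous g)
  (hloc : elocally_lipschitz g) (hne : argmin f !=set0)
  (hfstar : forall z, argmin f z -> f z = fstar)
  (ha0 : 0 < alpha 0) (ht0 : 0 < theta 0) (htau : 1 <= tau)
  (hom : 0 < omega) (hom2 : omega <= 1 / Num.sqrt 2)
  (hgmin : 0 < gmin) (hgg : gmin <= gmax)
  (hgam : forall k, gmin <= gamma k <= gmax)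
  (hstep : forall k, x k.+1 = x k - (alpha k * gamma k) *: g (x k))
  (halpha : forall k, (1 <= k)%N ->
     alpha k = adasga_alpha g x alpha theta gamma tau omega k)
  (htheta : forall k, (1 <= k)%N ->
     theta k = alpha k * gamma k / (alpha k.-1 * gamma k.-1))
  (heta : eta = dist_to (x 0) (argmin f) ^+ 2
        + 2 * alpha 0 ^+ 2 * gamma 0 ^+ 2 * enorm (g (x 0)) ^+ 2
        + 2 * alpha 0 * gamma 0 * theta 0 * (f (x 0) - fstar))
  (hRad : Num.sqrt eta + dist_to (x 0) (argmin f) + enorm (x 0) < Rad)
  (hLW : 0 < LW)
  (hlip : elipschitz_on g (ecball 0 Rad) LW).

#[local] Set Default Proof Using "All".

Local Notation lam k := (alpha k * gamma k).

Lemma gam_pos k : 0 < gamma k.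
Proof. by case/andP: (hgam k) => h _; exact: lt_le_trans h. Qed.

Lemma om2 : omega ^+ 2 <= 1 / 2.
Proof.
have s2 : 0 < Num.sqrt 2 :> R by rewrite sqrtr_gt0.
have h : omega ^+ 2 <= (1 / Num.sqrt 2) ^+ 2.
  by rewrite lerXn2r // ?nnegrE ?divr_ge0 // ltW.
by rewrite expr_div_n sqr_sqrtr // expr1n in h.
Qed.

Lemma sqrt_arg_ge1 k : 0 < theta k -> 1 <= 2 * (1 - omega ^+ 2) + theta k / tau.
Proof.
move=> tk; have := om2 => o; have : 0 <= theta k / tau.
  by rewrite divr_ge0 // ltW // (lt_le_trans ltr01 htau).
lra.
Qed.

Lemma sqrt_ge1 k : 0 < theta k -> 1 <= Num.sqrt (2 * (1 - omega ^+ 2) + theta k / tau).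
Proof. move=> tk; have h := sqrt_arg_ge1 tk; rewrite -[X in X <= _]sqrtr1 ler_sqrt //; exact: le_trans ler01 h. Qed.

Lemma Lk_ge0 k : 0 <= Lk g x k.
Proof. by rewrite /Lk divr_ge0 // enorm_ge0. Qed.

Lemma pos_all k : 0 < alpha k /\ 0 < theta k.
Proof.
elim: k => [|k [ak tk]]; first by split.
have ak1 : 0 < alpha k.+1.
  rewrite halpha // /adasga_alpha /=.
  have Ap : 0 < alpha k * gamma k / gamma k.+1 *
      Num.sqrt (2 * (1 - omega ^+ 2) + theta k / tau).
    rewrite mulr_gt0 ?divr_gt0 ?mulr_gt0 ?gam_pos //.
    exact: (lt_le_trans ltr01 (sqrt_ge1 tk)).
  case: ifP => L0 //.
  rewrite lt_min Ap /= divr_gt0 // mulr_gt0 ?gam_pos //.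
  by rewrite lt_neqAle eq_sym L0 Lk_ge0.
split => //.
rewrite htheta //= divr_gt0 // mulr_gt0 ?gam_pos //.
Qed.

Lemma alpha_pos k : 0 < alpha k. Proof. by case: (pos_all k). Qed.
Lemma theta_pos k : 0 < theta k. Proof. by case: (pos_all k). Qed.
Lemma lam_pos k : 0 < lam k. Proof. by rewrite mulr_gt0 ?alpha_pos ?gam_pos. Qed.

Lemma theta_eq k : theta k.+1 = lam k.+1 / lam k.
Proof. by rewrite htheta. Qed.

Lemma rule_up k :
  lam k.+1 <= lam k * Num.sqrt (2 * (1 - omega ^+ 2) + theta k / tau).
Proof.
have gp := gam_pos k.+1.
have : alpha k.+1 <= alpha k * gamma k / gamma k.+1 *
      Num.sqrt (2 * (1 - omega ^+ 2) + theta k / tau).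
  rewrite halpha // /adasga_alpha /=.
  by case: ifP => _ //; rewrite ge_min lexx.
rewrite -(ler_pM2r gp) => h; apply: (le_trans h).
rewrite le_eqVlt; apply/orP; left; apply/eqP.
by field; rewrite gt_eqF.
Qed.

Lemma enorm_eq0 (v : 'rV[R]_n) : enorm v = 0 -> v = 0.
Proof. by move=> h; apply: dotp_eq0; rewrite -enorm_sq h expr0n. Qed.

Lemma rule_lip k :
  lam k.+1 * enorm (g (x k.+1) - g (x k)) <= omega * enorm (x k.+1 - x k).
Proof.
have gp := gam_pos k.+1.
have lp := lam_pos k.+1.
have nx := enorm_ge0 (x k.+1 - x k).
have ng := enorm_ge0 (g (x k.+1) - g (x k)).
have [L0|L0] := eqVneq (Lk g x k.+1) 0.
  move: L0; rewrite /Lk /= => /eqP; rewrite mulf_eq0 invr_eq0 => /orP [] /eqP h.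
    by rewrite h mulr0 mulr_ge0 // ltW.
  have hx := enorm_eq0 h.
  have -> : x k.+1 = x k by apply/eqP; rewrite -subr_eq0 hx.
  by rewrite !subrr !enorm0 !mulr0.
have hx0 : enorm (x k.+1 - x k) != 0.
  by apply: contraNneq L0 => h; rewrite /Lk /= h invr0 mulr0.
have hxp : 0 < enorm (x k.+1 - x k) by rewrite lt_neqAle eq_sym hx0.
have Lp : 0 < Lk g x k.+1 by rewrite lt_neqAle eq_sym L0 Lk_ge0.
have : alpha k.+1 <= omega / (gamma k.+1 * Lk g x k.+1).
  rewrite halpha // /adasga_alpha /= (negbTE L0).
  by rewrite ge_min lexx orbT.
rewrite -(ler_pM2r gp) => h.
have h2 : lam k.+1 <= omega / Lk g x k.+1.
  apply: (le_trans h); rewrite le_eqVlt; apply/orP; left; apply/eqP.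
  by field; rewrite !gt_eqF.
have := ler_wpM2r ng h2.
have -> : omega / Lk g x k.+1 * enorm (g (x k.+1) - g (x k)) = omega * enorm (x k.+1 - x k).
  rewrite /Lk /=; field; apply/andP; split; rewrite gt_eqF //.
  move: Lp; rewrite /Lk /= pmulr_lgt0 ?invr_gt0 //.
done.
Qed.

Lemma rule_low k L' : 0 < L' -> Lk g x k.+1 <= L' ->
  Num.min (lam k) (omega / L') <= lam k.+1.
Proof.
move=> L'p hL.
have gp := gam_pos k.+1.
have tk := theta_pos k.
have s1 := sqrt_ge1 tk.
have lk := lam_pos k.
set S := Num.sqrt _ in s1.
have hA : lam k <= alpha k * gamma k / gamma k.+1 * S * gamma k.+1.
  have -> : alpha k * gamma k / gamma k.+1 * S * gamma k.+1 = lam k * S.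
    by field; rewrite gt_eqF.
  by rewrite ler_peMr // ltW.
rewrite (@halpha k.+1) // /adasga_alpha /= -/S.
case: ifP => L0.
  by rewrite ge_min hA.
have Lp : 0 < Lk g x k.+1 by rewrite lt_neqAle eq_sym L0 Lk_ge0.
have hB : omega / L' <= omega / (gamma k.+1 * Lk g x k.+1) * gamma k.+1.
  have -> : omega / (gamma k.+1 * Lk g x k.+1) * gamma k.+1 = omega / Lk g x k.+1.
    by field; rewrite !gt_eqF.
  by rewrite ler_pM2l // lef_pV2 ?posrE.
have [hAB|hAB] := leP (alpha k * gamma k / gamma k.+1 * S)
                      (omega / (gamma k.+1 * Lk g x k.+1)).
  by rewrite ge_min hA.
by rewrite ge_min hB orbT.
Qed.



Lemma fstar_le y : fstar <= f y.
Proof. by case: hne => z hz; rewrite -(hfstar hz); exact: hz. Qed.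

Definition ee (xs : 'rV[R]_n) k := enorm (x k - xs) ^+ 2.
Definition qq k := f (x k) - fstar.
Definition DD k := lam k ^+ 2 * enorm (g (x k)) ^+ 2.
Definition cc : R := 1 / (1 - omega ^+ 2).
Definition aa : R := cc * omega ^+ 2.
Definition PP xs k := ee xs k.+1 + aa * DD k + lam k * (2 + cc * theta k) * qq k.
Definition ss N := \sum_(i < N) lam i.+1.

Lemma qq_ge0 k : 0 <= qq k.
Proof. by rewrite /qq subr_ge0 fstar_le. Qed.

Lemma DD_ge0 k : 0 <= DD k.
Proof. by rewrite /DD mulr_ge0 // sqr_ge0. Qed.

Lemma ee_ge0 xs k : 0 <= ee xs k.
Proof. by rewrite /ee sqr_ge0. Qed.

Lemma om_lt1 : 0 < 1 - omega ^+ 2.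
Proof. have := om2; lra. Qed.

Lemma cc_pos : 0 < cc.
Proof. by rewrite /cc divr_gt0 // om_lt1. Qed.

Lemma cc_le2 : cc <= 2.
Proof.
rewrite /cc ler_pdivrMr ?om_lt1 //; have := om2; lra.
Qed.

Lemma aa_ge0 : 0 <= aa.
Proof. by rewrite /aa mulr_ge0 ?sqr_ge0 // ltW // cc_pos. Qed.

Lemma cc_eq : 1 + aa = cc.
Proof.
rewrite /aa /cc; have h := om_lt1; field; by rewrite gt_eqF.
Qed.

Lemma ss_S N : ss N.+1 = ss N + lam N.+1.
Proof. by rewrite /ss big_ord_recr. Qed.

Lemma ss0 : ss 0 = 0.
Proof. by rewrite /ss big_ord0. Qed.

Lemma E_step xs k : argmin f xs ->
  ee xs k.+1 <= ee xs k - 2 * lam k * qq k + DD k.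
Proof.
move=> hxs.
have lp := lam_pos k.
rewrite /ee /DD hstep.
have -> : x k - lam k *: g (x k) - xs = (x k - xs) - lam k *: g (x k).
  by rewrite addrAC.
rewrite (enorm_sqB (x k - xs)) dotpZr enorm_sqZ.
have gi := grad_ineq hconv hgrad (x k) xs.
rewrite (hfstar hxs) in gi.
have e : dotp (g (x k)) (xs - x k) = - dotp (x k - xs) (g (x k)).
  by rewrite dotpC -dotpNl opprB.
rewrite e in gi.
have h : qq k <= dotp (x k - xs) (g (x k)) by rewrite /qq; lra.
have := ler_wpM2l (ltW lp) h; lra.
Qed.

Lemma Ds_step k :
  DD k.+1 <= omega ^+ 2 * DD k + theta k.+1 * lam k.+1 * (qq k - qq k.+1).
Proof.
set l := lam k; set l' := lam k.+1.
set G := g (x k); set G' := g (x k.+1).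
have lp : 0 < l := lam_pos k.
have lp' : 0 < l' := lam_pos k.+1.
have dx : x k.+1 - x k = - (l *: G) by rewrite hstep addrAC subrr add0r.
have h1 := rule_lip k; rewrite -/l' -/G -/G' dx enormN enormZ (ger0_norm (ltW lp)) in h1.
have h1' : l' ^+ 2 * enorm (G' - G) ^+ 2 <= omega ^+ 2 * (l ^+ 2 * enorm G ^+ 2).
  have a1 : 0 <= l' * enorm (G' - G) by rewrite mulr_ge0 ?enorm_ge0 // ltW.
  have := ler_pM a1 a1 h1 h1.
  move: (enorm (G' - G)) (enorm G) => u v; lra.
have h2 := grad_ineq hconv hgrad (x k.+1) (x k).
have e2 : x k - x k.+1 = l *: G by rewrite -opprB dx opprK.
rewrite e2 dotpZr -/G' in h2.
have h3 := grad_ineq hconv hgrad (x k) (x k.+1).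
rewrite dx dotpNr dotpZr -/G in h3.
have h2' : l * dotp G' G <= qq k - qq k.+1 by rewrite /qq; lra.
have h3' : qq k - qq k.+1 <= l * dotp G G by rewrite /qq; lra.
have h4 := enorm_sqB G' G.
rewrite -enorm_sq in h3'.
set r := l' ^+ 2 / l.
have rp : 0 <= r by rewrite /r divr_ge0 // ?sqr_ge0 // ltW.
have er : theta k.+1 * l' = r by rewrite theta_eq -/l -/l' /r; field; rewrite gt_eqF.
have h5 := ler_wpM2l rp h2'.
have h6 := ler_wpM2l rp h3'.
have e5 : r * (l * dotp G' G) = l' ^+ 2 * dotp G' G by rewrite /r; field; rewrite gt_eqF.
have e6 : r * (l * enorm G ^+ 2) = l' ^+ 2 * enorm G ^+ 2 by rewrite /r; field; rewrite gt_eqF.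
rewrite e5 in h5; rewrite e6 in h6.
rewrite /DD -/l -/l' -/G -/G' er.
have e7 : l' ^+ 2 * enorm G' ^+ 2 =
   l' ^+ 2 * enorm (G' - G) ^+ 2 + 2 * (l' ^+ 2 * dotp G' G) - l' ^+ 2 * enorm G ^+ 2.
  by rewrite h4; ring.
rewrite e7.
move: h1' h5 h6; clearbody r l l' G G'; lra.
Qed.

Lemma mono_coef k : cc * theta k.+1 * lam k.+1 <= lam k * (2 + cc * theta k).
Proof.
set l := lam k; set l' := lam k.+1.
have lp : 0 < l := lam_pos k.
have lp' : 0 < l' := lam_pos k.+1.
have tk := theta_pos k.
have tk' := theta_pos k.+1.
have ru := rule_up k; rewrite -/l -/l' in ru.
set S := Num.sqrt _ in ru.
have argp : 0 <= 2 * (1 - omega ^+ 2) + theta k / tau.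
  have := sqrt_arg_ge1 tk; lra.
have t' : theta k.+1 = l' / l by rewrite theta_eq.
have h : theta k.+1 <= S by rewrite t' ler_pdivrMr // mulrC.
have h2 : theta k.+1 ^+ 2 <= 2 * (1 - omega ^+ 2) + theta k / tau.
  have := ler_pM (ltW tk') (ltW tk') h h.
  rewrite -(sqr_sqrtr argp) -/S; clearbody S; lra.
have e1 : cc * (2 * (1 - omega ^+ 2)) = 2.
  by rewrite /cc; have := om_lt1 => o; field; rewrite gt_eqF.
have e2 : theta k / tau <= theta k.
  by rewrite ler_pdivrMr ?(lt_le_trans ltr01 htau) // ler_peMr // ltW.
have ccp := cc_pos.
have h3 := ler_wpM2l (ltW ccp) h2.
have h4 := ler_wpM2l (ltW ccp) e2.
have h5 : cc * theta k.+1 ^+ 2 <= 2 + cc * theta k by lra.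
have el : l' = theta k.+1 * l by rewrite t'; field; rewrite gt_eqF.
rewrite el.
have := ler_wpM2l (ltW lp) h5.
have -> : cc * theta k.+1 * (theta k.+1 * l) = l * (cc * theta k.+1 ^+ 2) by ring.
done.
Qed.

Lemma M_step xs k : argmin f xs ->
  PP xs k.+1 <= ee xs k.+1 + aa * DD k + cc * theta k.+1 * lam k.+1 * qq k.
Proof.
move=> hxs.
have h1 := E_step k.+1 hxs.
have h2 := Ds_step k.
have h3 := ler_wpM2l (ltW cc_pos) h2.
have e : (1 + aa) * DD k.+1 = cc * DD k.+1 by rewrite cc_eq.
have e2 : cc * omega ^+ 2 * DD k = aa * DD k by rewrite /aa.
rewrite /PP.
move: h1 h3 e e2; rewrite /aa; lra.
Qed.

Lemma P_mono xs k : argmin f xs -> PP xs k.+1 <= PP xs k.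
Proof.
move=> hxs.
have h1 := M_step k hxs.
have h2 := ler_wpM2r (qq_ge0 k) (mono_coef k).
have -> : PP xs k = ee xs k.+1 + aa * DD k + lam k * (2 + cc * theta k) * qq k by [].
lra.
Qed.

Lemma P0_bound xs : argmin f xs ->
  PP xs 0 <= ee xs 0 + 2 * DD 0 + 2 * lam 0 * theta 0 * qq 0.
Proof.
move=> hxs.
have h1 := E_step 0 hxs.
have e : (1 + aa) * DD 0 = cc * DD 0 by rewrite cc_eq.
have h2 := ler_wpM2r (DD_ge0 0) cc_le2.
have tq : 0 <= theta 0 * lam 0 * qq 0.
  by rewrite mulr_ge0 ?qq_ge0 // mulr_ge0 // ltW // lam_pos.
have h3 := ler_wpM2r tq cc_le2.
rewrite /PP; move: h1 e h2 h3; rewrite /aa; lra.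
Qed.

Lemma coef_ge0 k : 0 <= lam k * (2 + cc * theta k).
Proof.
apply: mulr_ge0; first exact: ltW (lam_pos k).
have := mulr_ge0 (ltW cc_pos) (ltW (theta_pos k)); lra.
Qed.

Lemma J_bound xs B N : argmin f xs -> 0 <= B ->
  (forall k, (1 <= k <= N.+1)%N -> B <= qq k) ->
  ee xs N.+2 + aa * DD N.+1 + lam N.+1 * (2 + cc * theta N.+1) * (qq N.+1 - B)
    + 2 * B * ss N.+1 <= PP xs 0.
Proof.
move=> hxs B0; elim: N => [|N IH] hq.
  have h1 := P_mono 0 hxs.
  have p : 0 <= B * (cc * theta 1 * lam 1).
    apply: mulr_ge0 => //; apply: mulr_ge0; last exact: ltW (lam_pos 1).
    by apply: mulr_ge0; [exact: ltW cc_pos | exact: ltW (theta_pos 1)].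
  rewrite ss_S ss0 add0r.
  have e : PP xs 1 = ee xs 2 + aa * DD 1 + lam 1 * (2 + cc * theta 1) * qq 1 by [].
  lra.
have hq' : forall k, (1 <= k <= N.+1)%N -> B <= qq k.
  by move=> k /andP[a b]; apply: hq; rewrite a /= (leq_trans b).
have IH' := IH hq'.
have hm := M_step N.+1 hxs.
have hc := mono_coef N.+1.
have hqB : 0 <= qq N.+1 - B by rewrite subr_ge0; apply: hq'; rewrite /= ltnSn.
have h := ler_wpM2r hqB hc.
rewrite ss_S.
have e : PP xs N.+2 = ee xs N.+3 + aa * DD N.+2 + lam N.+2 * (2 + cc * theta N.+2) * qq N.+2 by [].
lra.
Qed.

Lemma J_cor xs B N : argmin f xs -> 0 <= B ->
  (forall k, (1 <= k <= N)%N -> B <= qq k) ->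
  ee xs N.+1 + 2 * B * ss N <= PP xs 0.
Proof.
move=> hxs B0; case: N => [|N] hq.
  rewrite ss0 mulr0 addr0 /PP.
  have h1 := aa_ge0; have h2 := DD_ge0 0.
  have h3 := mulr_ge0 (coef_ge0 0) (qq_ge0 0).
  have := mulr_ge0 h1 h2; lra.
have := J_bound hxs B0 hq.
have h1 := mulr_ge0 aa_ge0 (DD_ge0 N.+1).
have hqB : 0 <= qq N.+1 - B by rewrite subr_ge0; apply: hq; rewrite /= leqnn.
have h3 := mulr_ge0 (coef_ge0 N.+1) hqB.
lra.
Qed.


Definition dist0 := dist_to (x 0) (argmin f).
Definition eta_xs xs := ee xs 0 + 2 * DD 0 + 2 * lam 0 * theta 0 * qq 0.

Lemma dset_inf : has_inf [set enorm (z - x 0) | z in argmin f].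
Proof.
split.
  by case: hne => z hz; exists (enorm (z - x 0)); exists z.
by exists 0 => _ [z _ <-]; exact: enorm_ge0.
Qed.

Lemma dist0_ge0 : 0 <= dist0.
Proof.
apply: lb_le_inf; first by case: dset_inf.
by move=> _ [z _ <-]; exact: enorm_ge0.
Qed.

Lemma dist0_le xs : argmin f xs -> dist0 <= enorm (xs - x 0).
Proof. by move=> hxs; apply: (ge_inf (proj2 dset_inf)); exists xs. Qed.

Lemma dist_approx e : 0 < e -> exists2 z, argmin f z & enorm (z - x 0) < dist0 + e.
Proof.
move=> e0; have [_ [z hz <-] h] := inf_adherent e0 dset_inf.
by exists z.
Qed.

Lemma eta_ge0 : 0 <= eta.
Proof.
rewrite heta.
have h1 := sqr_ge0 dist0.
have h2 : 0 <= 2 * alpha 0 ^+ 2 * gamma 0 ^+ 2 * enorm (g (x 0)) ^+ 2.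
  by do 3 (apply: mulr_ge0; last exact: sqr_ge0).
have h3 : 0 <= 2 * alpha 0 * gamma 0 * theta 0 * (f (x 0) - fstar).
  apply: mulr_ge0; last by rewrite subr_ge0 fstar_le.
  apply: mulr_ge0; last exact: ltW.
  apply: mulr_ge0; last exact: ltW (gam_pos 0).
  by apply: mulr_ge0; last exact: ltW.
rewrite -/dist0; lra.
Qed.

Lemma eta_xs_eq xs : eta_xs xs = eta + (enorm (xs - x 0) ^+ 2 - dist0 ^+ 2).
Proof.
rewrite heta /eta_xs /ee /DD /qq -/dist0 enormB exprMn; ring.
Qed.

Lemma good_xs e : 0 < e -> exists xs, [/\ argmin f xs, eta_xs xs <= eta + e &
  Num.sqrt (eta_xs xs) + enorm (xs - x 0) + enorm (x 0) < Rad].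
Proof.
move=> e0.
set M := Rad - (Num.sqrt eta + dist0 + enorm (x 0)).
have M0 : 0 < M by rewrite /M subr_gt0.
have d0 := dist0_ge0.
set K := 2 * dist0 + 1.
have K0 : 0 < K by rewrite /K; lra.
set del := Num.min (Num.min 1 (M / 2)) (Num.min (e / K) (M ^+ 2 / (8 * K))).
have del0 : 0 < del.
  rewrite /del !lt_min ltr01 /= !divr_gt0 ?mulr_gt0 ?exprn_gt0 //.
have dl1 : del <= 1 by rewrite /del !ge_min lexx.
have dl2 : del <= M / 2 by rewrite /del !ge_min lexx orbT.
have dl3 : del <= e / K by rewrite /del !ge_min lexx !orbT.
have dl4 : del <= M ^+ 2 / (8 * K) by rewrite /del !ge_min lexx !orbT.
have [xs hxs hd] := dist_approx del0.
set d' := enorm (xs - x 0).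
have d'0 : 0 <= d' := enorm_ge0 _.
have hdl := dist0_le hxs; rewrite -/d' in hdl.
set rho := del * K.
have hrho : d' ^+ 2 - dist0 ^+ 2 <= rho.
  have := ler_pM d'0 d'0 (ltW hd) (ltW hd).
  have : del * del <= del * 1 by rewrite ler_pM2l.
  rewrite /rho /K; lra.
have rho_e : rho <= e by rewrite /rho -ler_pdivlMr.
have rho_M : rho <= M ^+ 2 / 8.
  have e8 : M ^+ 2 / (8 * K) = M ^+ 2 / 8 / K by field; rewrite gt_eqF.
  by rewrite /rho -ler_pdivlMr // -e8.
have rho0 : 0 <= rho by rewrite /rho mulr_ge0 ?ltW.
have ee0 := eta_ge0.
have ex := eta_xs_eq xs; rewrite -/d' in ex.
exists xs; split => //; first by rewrite ex; lra.
have h1 : Num.sqrt (eta_xs xs) <= Num.sqrt eta + Num.sqrt rho.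
  apply: le_trans (sqrt_subadd ee0 rho0).
  by rewrite ler_sqrt ?addr_ge0 // ex lerD2l.
have h2 : Num.sqrt rho < M / 2.
  have M2 : 0 <= M / 2 by rewrite divr_ge0 // ltW.
  rewrite -(ger0_norm M2) -sqrtr_sqr ltr_sqrt ?exprn_gt0 ?divr_gt0 //.
  apply: (le_lt_trans rho_M); rewrite expr_div_n.
  have := exprn_gt0 2 M0; lra.
rewrite /M in dl2 h2; lra.
Qed.

Lemma ee_bound xs k : argmin f xs -> ee xs k <= eta_xs xs.
Proof.
move=> hxs.
have p0 := P0_bound hxs.
case: k => [|k].
  rewrite /eta_xs.
  have := DD_ge0 0.
  have := mulr_ge0 (mulr_ge0 (ltW (lam_pos 0)) (ltW (theta_pos 0))) (qq_ge0 0).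
  lra.
have := @J_cor xs 0 k hxs (lexx 0) (fun k _ => qq_ge0 k).
rewrite mulr0 mul0r addr0 /eta_xs => h; lra.
Qed.

Lemma contain xs k : argmin f xs ->
  Num.sqrt (eta_xs xs) + enorm (xs - x 0) + enorm (x 0) < Rad ->
  enorm (x k) < Rad.
Proof.
move=> hxs hR.
have h1 : enorm (x k - xs) <= Num.sqrt (eta_xs xs).
  by apply: le_sqrt_of_sq; [exact: enorm_ge0 | exact: ee_bound].
have -> : x k = (x k - xs) + (xs - x 0) + x 0 by rewrite addrA subrK subrK.
have h2 := enormD (x k - xs + (xs - x 0)) (x 0).
have h3 := enormD (x k - xs) (xs - x 0).
lra.
Qed.

Lemma contain_all k : enorm (x k) < Rad.
Proof.
have [xs [hxs _ hR]] := good_xs ltr01.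
exact: contain hxs hR.
Qed.

Lemma inW k : ecball 0 Rad (x k).
Proof. by rewrite /ecball /= subr0 ltW // contain_all. Qed.

Lemma Lk_le k : Lk g x k.+1 <= LW.
Proof.
rewrite /Lk /=.
have [h|h] := eqVneq (enorm (x k.+1 - x k)) 0.
  by rewrite h invr0 mulr0 ltW.
have hp : 0 < enorm (x k.+1 - x k) by rewrite lt_neqAle eq_sym h enorm_ge0.
rewrite ler_pdivrMr //.
exact: hlip (inW _) (inW _).
Qed.

Definition lmin := Num.min (lam 0) (omega / LW).

Lemma lmin_pos : 0 < lmin.
Proof. by rewrite /lmin lt_min lam_pos /= divr_gt0. Qed.

Lemma lmin_le k : lmin <= lam k.
Proof.
elim: k => [|k IH]; first by rewrite /lmin ge_min lexx.
apply: le_trans (rule_low hLW (Lk_le k)).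
by rewrite le_min IH /lmin ge_min lexx orbT.
Qed.


Lemma seg_in k (t : R) : 0 <= t -> t <= 1 ->
  ecball 0 Rad (x k + t *: (x k.+1 - x k)).
Proof.
move=> t0 t1; rewrite /ecball /= subr0.
apply: ball_conv => //; rewrite -(subr0 (x _)); exact: inW.
Qed.

Lemma desc_iter k (y : 'rV[R]_n) (s : R) : 0 <= s -> s <= 1 ->
  y = x k + s *: (x k.+1 - x k) ->
  f y <= f (x k) + dotp (g (x k)) (y - x k) + LW / 2 * enorm (y - x k) ^+ 2.
Proof.
move=> s0 s1 ->.
apply: (descent_lemma hconv hgrad (ltW hLW) hlip) => t t0 t1.
have -> : x k + t *: (x k + s *: (x k.+1 - x k) - x k) = x k + (t * s) *: (x k.+1 - x k).
  by rewrite addrAC subrr add0r scalerA.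
apply: seg_in; first exact: mulr_ge0.
by rewrite -[1]mulr1 ler_pM.
Qed.

Lemma B_step k : 1 / LW <= lam k -> enorm (g (x k)) ^+ 2 <= 2 * LW * qq k.
Proof.
move=> hl.
have lp := lam_pos k.
set s := 1 / (LW * lam k).
have s0 : 0 <= s by rewrite /s divr_ge0 // mulr_ge0 ?ltW.
have s1 : s <= 1.
  have lw : 0 < LW * lam k by rewrite mulr_gt0.
  rewrite /s ler_pdivrMr //; move: hl; rewrite ler_pdivrMr //; lra.
set y := x k - (1 / LW) *: g (x k).
have ey : y = x k + s *: (x k.+1 - x k).
  rewrite /y hstep.
  have -> : x k - lam k *: g (x k) - x k = - (lam k *: g (x k)) by rewrite addrAC subrr add0r.
  rewrite scalerN scalerA.
  have -> : s * lam k = 1 / LW.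
    by rewrite /s; field; rewrite !gt_eqF ?alpha_pos ?gam_pos.
  done.
have h := desc_iter s0 s1 ey.
have e1 : y - x k = - ((1 / LW) *: g (x k)) by rewrite /y addrAC subrr add0r.
rewrite e1 dotpNr dotpZr enormN enorm_sqZ -enorm_sq in h.
move: h.
have hy := fstar_le y.
rewrite /qq.
set G := enorm (g (x k)) ^+ 2.
have -> : LW / 2 * ((1 / LW) ^+ 2 * G) = G / (2 * LW) by field; rewrite gt_eqF.
move=> h.
have : G / (2 * LW) <= f (x k) - fstar.
  have -> : G / (2 * LW) = 1 / LW * G - G / (2 * LW) by field; rewrite gt_eqF.
  lra.
by rewrite ler_pdivrMr ?mulr_gt0 // mulrC.
Qed.

Lemma S_step k : lam k <= 1 / LW -> qq k.+1 <= qq k - lam k * enorm (g (x k)) ^+ 2 / 2.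
Proof.
move=> hl.
have lp := lam_pos k.
have ey : x k.+1 = x k + 1 *: (x k.+1 - x k) by rewrite scale1r addrC subrK.
have h := desc_iter ler01 (lexx 1) ey.
have e1 : x k.+1 - x k = - (lam k *: g (x k)) by rewrite hstep addrAC subrr add0r.
rewrite e1 dotpNr dotpZr enormN enorm_sqZ -enorm_sq in h.
move: h; rewrite /qq.
set G := enorm (g (x k)) ^+ 2.
have G0 : 0 <= G by rewrite /G sqr_ge0.
have h2 : lam k * LW <= 1 by move: hl; rewrite ler_pdivlMr.
have h3 := ler_wpM2r (mulr_ge0 (ltW lp) G0) h2.
move=> h; lra.
Qed.

Lemma grad_zero xs : argmin f xs -> enorm xs < Rad -> g xs = 0.
Proof.
move=> hxs hR.
set v := g xs.
set nv := enorm v.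
have nv0 : 0 <= nv := enorm_ge0 v.
set t := Num.min (1 / LW) ((Rad - enorm xs) / (nv + 1)).
have t0 : 0 < t by rewrite /t lt_min !divr_gt0 ?subr_gt0 //; lra.
have t1 : t <= 1 / LW by rewrite /t ge_min lexx.
have t2 : t <= (Rad - enorm xs) / (nv + 1) by rewrite /t ge_min lexx orbT.
have tnv : t * nv < Rad - enorm xs.
  have p1 : 0 < nv + 1 by lra.
  apply: (le_lt_trans (ler_wpM2r nv0 t2)).
  rewrite mulrAC ltr_pdivrMr // ltr_pM2l ?subr_gt0 //; lra.
set y := xs + (- t) *: v.
have hd := descent_lemma hconv hgrad (ltW hLW) hlip (x := xs) (y := y).
have seg : forall s : R, 0 <= s -> s <= 1 -> ecball 0 Rad (xs + s *: (y - xs)).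
  move=> s s0 s1; rewrite /ecball /= subr0.
  have -> : xs + s *: (y - xs) = xs + (- (s * t)) *: v.
    by rewrite /y addrAC subrr add0r scalerA mulrN.
  apply: (le_trans (enormD _ _)).
  rewrite enormZ normrN (ger0_norm (mulr_ge0 s0 (ltW t0))).
  have : s * t * nv <= t * nv.
    by rewrite -mulrA; apply: ler_piMl => //; exact: mulr_ge0 (ltW t0) nv0.
  rewrite -/nv; lra.
have h := hd seg.
have e1 : y - xs = (- t) *: v by rewrite /y addrAC subrr add0r.
rewrite e1 dotpZr enorm_sqZ -enorm_sq -/v in h.
have hy := fstar_le y; rewrite -(hfstar hxs) in hy.
set V := enorm v ^+ 2 in h.
have V0 : 0 <= V by rewrite /V sqr_ge0.
have h2 : t * LW <= 1 by move: t1; rewrite ler_pdivlMr.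
have h3 := ler_wpM2r (mulr_ge0 (ltW t0) V0) h2.
have : t * V <= 0.
  have e2 : (- t) ^+ 2 = t * t by rewrite sqrrN expr2.
  rewrite e2 in h.
  lra.
rewrite pmulr_rle0 // => V0'.
apply: enorm_eq0.
have : V = 0 by apply/eqP; rewrite eq_le V0' V0.
by rewrite /V => /eqP; rewrite sqrf_eq0 => /eqP.
Qed.

Lemma q_upper xs k : argmin f xs -> enorm xs < Rad -> qq k <= LW / 2 * ee xs k.
Proof.
move=> hxs hR.
have g0 := grad_zero hxs hR.
have hd := descent_lemma hconv hgrad (ltW hLW) hlip (x := xs) (y := x k).
have seg : forall s : R, 0 <= s -> s <= 1 -> ecball 0 Rad (xs + s *: (x k - xs)).
  move=> s s0 s1; rewrite /ecball /= subr0; apply: ball_conv => //.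
    exact: ltW.
  by rewrite -(subr0 (x k)); exact: inW.
have h := hd seg.
rewrite g0 dotp0l addr0 (hfstar hxs) in h.
by rewrite /qq /ee; lra.
Qed.


Lemma key_a xs N G : argmin f xs -> enorm xs < Rad -> 0 <= G ->
  (forall k, (1 <= k <= N)%N -> G <= enorm (g (x k)) ^+ 2) ->
  G * ss N <= LW * eta_xs xs.
Proof.
move=> hxs hR G0 hG.
set B := G / (2 * LW).
have B0 : 0 <= B by rewrite /B divr_ge0 // mulr_ge0 // ltW.
have p0 : PP xs 0 <= eta_xs xs := P0_bound hxs.
have eB : LW * (2 * B) = G by rewrite /B; field; rewrite gt_eqF.
have eB2 : 2 * LW * B = G by rewrite /B; field; rewrite gt_eqF.
case: (pselect (exists k, (1 <= k <= N)%N && (qq k < B))) => [hex|hnex].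
  case: (ex_minnP hex) => k0 /andP[/andP[k1 kN] qlt] hmin.
  case: k0 k1 kN qlt hmin => [//|j] _ jN qlt hmin.
  have hpre : forall k, (1 <= k <= j)%N -> B <= qq k.
    move=> k /andP[a b]; rewrite leNgt; apply/negP => hlt.
    have := hmin k; rewrite a /= hlt (leq_trans b (ltnW jN)) => /(_ isT).
    by rewrite ltnNge b.
  have hJ := J_cor hxs B0 hpre.
  have T : forall i, (j.+1 + i <= N.+1)%N ->
      qq (j.+1 + i) + G / 2 * (ss (j + i) - ss j) <= qq j.+1 /\
      ((j.+1 + i <= N)%N -> qq (j.+1 + i) < B).
    elim=> [|i IH] hi.
      by rewrite !addn0 subrr mulr0 addr0; split => // _.
    have hi' : (j.+1 + i <= N.+1)%N by apply: leq_trans hi; rewrite leq_add2l.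
    have [IH1 IH2] := IH hi'.
    have mN : (j.+1 + i <= N)%N by move: hi; rewrite addnS ltnS.
    have qm := IH2 mN.
    set m := (j.+1 + i)%N in IH1 IH2 mN qm *.
    have hGm : G <= enorm (g (x m)) ^+ 2 by apply: hG; rewrite mN andbT /m addSn.
    have hl : lam m <= 1 / LW.
      rewrite leNgt; apply/negP => hgt.
      have := B_step (ltW hgt); rewrite -/m => hb.
      have : 2 * LW * qq m < 2 * LW * B by rewrite ltr_pM2l // mulr_gt0.
      rewrite eB2 => h; lra.
    have hs := S_step hl.
    have lm := lam_pos m.
    have h2 := ler_wpM2l (ltW lm) hGm.
    have e1 : (j.+1 + i.+1 = m.+1)%N by rewrite addnS.
    have e2 : ss (j + i.+1) = ss (j + i) + lam m by rewrite addnS ss_S /m addSn.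
    rewrite e1 e2.
    have g0 := sqr_ge0 (enorm (g (x m))).
    have h3 := mulr_ge0 (ltW lm) g0.
    split; first lra.
    move=> _; lra.
  have jN' : (j.+1 + (N - j) = N.+1)%N by rewrite addSn subnKC // ltnW.
  have [T1 _] := T (N - j)%N (eq_leq jN').
  rewrite jN' subnKC ?(ltnW jN) // in T1.
  have qN := qq_ge0 N.+1.
  have qup := q_upper j.+1 hxs hR.
  have hE : ee xs j.+1 <= eta_xs xs - 2 * B * ss j by lra.
  have L2 : 0 <= LW / 2 by rewrite divr_ge0 // ltW.
  have := ler_wpM2l L2 hE.
  have e3 : LW / 2 * (eta_xs xs - 2 * B * ss j) = LW / 2 * eta_xs xs - G / 2 * ss j.
    by rewrite -eB; field.
  rewrite e3 => h4; lra.
have hall : forall k, (1 <= k <= N)%N -> B <= qq k.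
  move=> k hk; rewrite leNgt; apply/negP => hlt; apply: hnex.
  by exists k; rewrite hk hlt.
have hJ := J_cor hxs B0 hall.
have ee0 := ee_ge0 xs N.+1.
have h : 2 * B * ss N <= eta_xs xs by lra.
have := ler_wpM2l (ltW hLW) h.
have e : LW * (2 * B * ss N) = G * ss N by rewrite -eB; ring.
by rewrite e.
Qed.


Lemma m_eq : Num.min (LW * alpha 0 * gamma 0) omega = LW * lmin.
Proof.
rewrite /lmin -mulrA.
have [h|h] := leP (lam 0) (omega / LW).
  rewrite min_l //.
  by move: h; rewrite ler_pdivlMr // mulrC.
rewrite min_r.
  by rewrite mulrC divfK // gt_eqF.
by move: h; rewrite ltr_pdivrMr // mulrC => /ltW.
Qed.

Lemma ss_ge N : N%:R * lmin <= ss N.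
Proof.
elim: N => [|N IH]; first by rewrite ss0 mul0r.
rewrite ss_S -natr1 mulrDl mul1r.
exact: lerD IH (lmin_le _).
Qed.

Lemma good_xs2 e : 0 < e -> exists xs, [/\ argmin f xs, eta_xs xs <= eta + e & enorm xs < Rad].
Proof.
move=> e0; have [xs [hxs he hR]] := good_xs e0.
exists xs; split => //.
have -> : xs = (xs - x 0) + x 0 by rewrite subrK.
apply: le_lt_trans (enormD _ _) _.
have := sqrtr_ge0 (eta_xs xs); lra.
Qed.

Lemma part_a1 N : (1 <= N)%N -> exists k, [/\ (1 <= k)%N, (k <= N)%N &
  enorm (g (x k)) <= Num.sqrt (LW ^+ 2 * eta / (N%:R * Num.min (LW * alpha 0 * gamma 0) omega))].
Proof.
move=> N1.
rewrite m_eq.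
set C := LW ^+ 2 * eta / (N%:R * (LW * lmin)).
case: (pselect (exists k, [/\ (1 <= k)%N, (k <= N)%N & enorm (g (x k)) <= Num.sqrt C])) => // hn.
exfalso.
have lp := lmin_pos.
have Np : 0 < N%:R :> R by rewrite ltr0n.
have C0 : 0 <= C.
  rewrite /C; apply: divr_ge0; first exact: mulr_ge0 (sqr_ge0 _) eta_ge0.
  exact: ltW (mulr_gt0 Np (mulr_gt0 hLW lp)).
have hall : forall k, (1 <= k <= N)%N -> C < enorm (g (x k)) ^+ 2.
  move=> k /andP[k1 kN].
  have h : Num.sqrt C < enorm (g (x k)).
    rewrite ltNge; apply/negP => hle; apply: hn; exists k; split => //.
  have := ltr_pM (sqrtr_ge0 C) (sqrtr_ge0 C) h h.
  by rewrite -expr2 sqr_sqrtr // expr2.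
have [d d0 hd] := finite_gap hall.
set G := C + d.
have G0 : 0 <= G by rewrite /G; lra.
set Q := N%:R * lmin.
have Qp : 0 < Q by rewrite /Q mulr_gt0.
set e := d * Q / (2 * LW).
have ep : 0 < e by rewrite /e divr_gt0 ?mulr_gt0.
have [xs [hxs he hR]] := good_xs2 ep.
have h1 := key_a hxs hR G0 hd.
have h2 := ler_wpM2l G0 (ss_ge N).
have h3 := ler_wpM2l (ltW hLW) he.
have e1 : C * Q = LW * eta.
  rewrite /C /Q; field; rewrite !gt_eqF //.
have e2 : LW * e = d * Q / 2 by rewrite /e; field; rewrite gt_eqF.
have e3 : G * Q = C * Q + d * Q by rewrite /G mulrDl.
have dQ := mulr_gt0 d0 Qp.
rewrite -/Q in h2.
move: h1 h2 h3 e1 e2 e3 dQ; clearbody G Q e; rewrite mulrDr; lra.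
Qed.

Lemma part_a2 eps : 0 < eps -> exists Neps : nat, [/\ enorm (g (x Neps)) <= eps,
  (forall j : nat, (j < Neps)%N -> ~ (enorm (g (x j)) <= eps)) &
  (Neps%:Z <= Num.ceil (1 + LW ^+ 2 * eta / (eps ^+ 2 * Num.min (LW * alpha 0 * gamma 0) omega)))%R].
Proof.
move=> e0.
have mp : 0 < Num.min (LW * alpha 0 * gamma 0) omega by rewrite m_eq mulr_gt0 ?lmin_pos.
set m := Num.min _ _ in mp *.
have C0 : 0 <= LW ^+ 2 * eta / (eps ^+ 2 * m).
  apply: divr_ge0; first exact: mulr_ge0 (sqr_ge0 _) eta_ge0.
  exact: ltW (mulr_gt0 (exprn_gt0 2 e0) mp).
apply: (first_index (P := fun k => enorm (g (x k)) <= eps) C0) => N N1 CN.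
have [k [k1 kN hk]] := part_a1 N1.
exists k; split => //.
apply: le_trans hk _.
rewrite -(ger0_norm (ltW e0)) -sqrtr_sqr ler_sqrt ?sqr_ge0 //.
have Np : 0 < N%:R :> R by rewrite ltr0n.
rewrite -/m ler_pdivrMr ?mulr_gt0 //.
move: CN; rewrite ler_pdivrMr ?mulr_gt0 ?exprn_gt0 // => CN.
have : LW ^+ 2 * eta <= N%:R * (eps ^+ 2 * m) by [].
move=> h; apply: le_trans h _.
by rewrite le_eqVlt; apply/orP; left; apply/eqP; ring.
Qed.

Lemma Rad_pos : 0 < Rad.
Proof.
have := sqrtr_ge0 eta; have := dist0_ge0; have := enorm_ge0 (x 0).
move: hRad; rewrite -/dist0; lra.
Qed.

Lemma part_b1 N : (1 <= N)%N -> exists k, (k <= N)%N /\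
  f (x k) - fstar <= LW * ((Rad + enorm (x 0)) ^+ 2 + eta) / (2 * N%:R * Num.min (LW * alpha 0 * gamma 0) omega).
Proof.
move=> N1.
rewrite m_eq.
set Q := (Rad + enorm (x 0)) ^+ 2.
have Qp : 0 < Q by rewrite /Q exprn_gt0 // ltr_pwDl ?enorm_ge0 ?Rad_pos.
set Bb := LW * (Q + eta) / (2 * N%:R * (LW * lmin)).
case: (pselect (exists k, (k <= N)%N /\ f (x k) - fstar <= Bb)) => // hn.
exfalso.
have lp := lmin_pos.
have Np : 0 < N%:R :> R by rewrite ltr0n.
have Bb0 : 0 <= Bb.
  rewrite /Bb; apply: divr_ge0.
    exact: mulr_ge0 (ltW hLW) (addr_ge0 (ltW Qp) eta_ge0).
  exact: ltW (mulr_gt0 (mulr_gt0 (ltr0Sn _ 1) Np) (mulr_gt0 hLW lp)).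
have hall : forall k, (1 <= k <= N)%N -> Bb <= qq k.
  move=> k /andP[_ kN]; rewrite leNgt; apply/negP => hlt; apply: hn.
  by exists k; split => //; rewrite ltW.
have Q2 : 0 < Q / 2 by rewrite divr_gt0.
have [xs [hxs he _]] := good_xs2 Q2.
have hJ := J_cor hxs Bb0 hall.
have p0 : PP xs 0 <= eta_xs xs := P0_bound hxs.
have ee0 := ee_ge0 xs N.+1.
have h2 := ler_wpM2l Bb0 (ss_ge N).
have e1 : 2 * (Bb * (N%:R * lmin)) = Q + eta.
  rewrite /Bb; field; rewrite !gt_eqF //.
move: hJ p0 ee0 h2 e1 he; clearbody Bb Q; lra.
Qed.

Lemma part_b2 eps : 0 < eps -> exists Neps : nat, [/\ f (x Neps) - fstar <= eps,
  (forall j : nat, (j < Neps)%N -> ~ (f (x j) - fstar <= eps)) &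
  (Neps%:Z <= Num.ceil (1 + LW * ((Rad + enorm (x 0)) ^+ 2 + eta)
       / (2 * eps * Num.min (LW * alpha 0 * gamma 0) omega)))%R].
Proof.
move=> e0.
have mp : 0 < Num.min (LW * alpha 0 * gamma 0) omega by rewrite m_eq mulr_gt0 ?lmin_pos.
set m := Num.min _ _ in mp *.
set Q := (Rad + enorm (x 0)) ^+ 2.
have Q0 : 0 <= Q by rewrite /Q sqr_ge0.
have C0 : 0 <= LW * (Q + eta) / (2 * eps * m).
  apply: divr_ge0; first exact: mulr_ge0 (ltW hLW) (addr_ge0 Q0 eta_ge0).
  exact: ltW (mulr_gt0 (mulr_gt0 (ltr0Sn _ 1) e0) mp).
apply: (first_index (P := fun k => f (x k) - fstar <= eps) C0) => N N1 CN.
have [k [kN hk]] := part_b1 N1.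
exists k; split => //.
apply: le_trans hk _.
have Np : 0 < N%:R :> R by rewrite ltr0n.
rewrite -/m -/Q ler_pdivrMr ?mulr_gt0 //.
move: CN; rewrite ler_pdivrMr ?mulr_gt0 // => CN.
apply: le_trans CN _.
by rewrite le_eqVlt; apply/orP; left; apply/eqP; ring.
Qed.

End Algo.

Unset Implicit Arguments.

Theorem theorem4p4 (R : realType) (n : nat)
  (f : 'rV[R]_n -> R) (g : 'rV[R]_n -> 'rV[R]_n) (fstar : R)
  (x : nat -> 'rV[R]_n) (alpha theta gamma : nat -> R)
  (tau omega gmin gmax eta Rad LW : R) :
  econvex f ->
  is_gradient f g ->
  continuous g ->
  elocally_lipschitz g ->
  argmin f !=set0 ->
  (forall z, argmin f z -> f z = fstar) ->
  0 < alpha 0 -> 0 < theta 0 -> 1 <= tau ->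
  0 < omega -> omega <= 1 / Num.sqrt 2 ->
  0 < gmin -> gmin <= gmax ->
  (forall k, gmin <= gamma k <= gmax) ->
  (forall k, x k.+1 = x k - (alpha k * gamma k) *: g (x k)) ->
  (forall k, (1 <= k)%N ->
     alpha k = adasga_alpha g x alpha theta gamma tau omega k) ->
  (forall k, (1 <= k)%N ->
     theta k = alpha k * gamma k / (alpha k.-1 * gamma k.-1)) ->
  eta = dist_to (x 0) (argmin f) ^+ 2
        + 2 * alpha 0 ^+ 2 * gamma 0 ^+ 2 * enorm (g (x 0)) ^+ 2
        + 2 * alpha 0 * gamma 0 * theta 0 * (f (x 0) - fstar) ->
  Num.sqrt eta + dist_to (x 0) (argmin f) + enorm (x 0) < Rad ->
  0 < LW ->
  elipschitz_on g (ecball 0 Rad) LW ->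
  let m := Num.min (LW * alpha 0 * gamma 0) omega in
  (* (a) *)
  ((forall N : nat, (1 <= N)%N ->
      exists k : nat, [/\ (1 <= k)%N, (k <= N)%N &
        enorm (g (x k)) <= Num.sqrt (LW ^+ 2 * eta / (N%:R * m))]) /\
   (forall eps : R, 0 < eps ->
      exists Neps : nat, [/\ enorm (g (x Neps)) <= eps,
        (forall j : nat, (j < Neps)%N -> ~ (enorm (g (x j)) <= eps)) &
        (Neps%:Z <= Num.ceil (1 + LW ^+ 2 * eta / (eps ^+ 2 * m)))%R])) /\
  (* (b) *)
  ((forall N : nat, (1 <= N)%N ->
      exists k : nat, (k <= N)%N /\
        f (x k) - fstar <=
          LW * ((Rad + enorm (x 0)) ^+ 2 + eta) / (2 * N%:R * m)) /\
   (forall eps : R, 0 < eps ->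
      exists Neps : nat, [/\ f (x Neps) - fstar <= eps,
        (forall j : nat, (j < Neps)%N -> ~ (f (x j) - fstar <= eps)) &
        (Neps%:Z <= Num.ceil (1 + LW * ((Rad + enorm (x 0)) ^+ 2 + eta)
                                   / (2 * eps * m)))%R])).
Proof.
move=> hconv hgrad hcont hloc hne hfstar ha0 ht0 htau hom hom2 hgmin hgg hgam
  hstep halpha htheta heta hRad hLW hlip m.
split; split.
- move=> N N1.
  exact: (part_a1 hconv hgrad hcont hloc hne hfstar ha0 ht0 htau hom hom2 hgmin hgg hgam
    hstep halpha htheta heta hRad hLW hlip N1).
- move=> eps e0.
  exact: (part_a2 hconv hgrad hcont hloc hne hfstar ha0 ht0 htau hom hom2 hgmin hgg hgam
    hstep halpha htheta heta hRad hLW hlip e0).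
- move=> N N1.
  exact: (part_b1 hconv hgrad hcont hloc hne hfstar ha0 ht0 htau hom hom2 hgmin hgg hgam
    hstep halpha htheta heta hRad hLW hlip N1).
- move=> eps e0.
  exact: (part_b2 hconv hgrad hcont hloc hne hfstar ha0 ht0 htau hom hom2 hgmin hgg hgam
    hstep halpha htheta heta hRad hLW hlip e0).
Qed.
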